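(* Let $C$ be an $[n,k]$ code over $\mathbb{F}_q$ with $k\ge 2$. (a) If $C$ is a dual Hamming code, then $d(C^\perp)=3$ and $\gamma(C)=k=k-d(C^\perp)+3$. (b) If $C$ is an MDS code (i.e. its minimum Hamming weight equals $n-k+1$) having no codeword of weight $n$, then $d(C^\perp)=k+1$ and $\gamma(C)=2=k-d(C^\perp)+3$.
   Context: An $[n,k]$ code over $\mathbb{F}_q$ is a $k$-dimensional subspace $C\subseteq\mathbb{F}_q^n$; write $E=\{1,\dots,n\}$. For $\bm{x}\in\mathbb{F}_q^n$, $\mathrm{supp}(\bm{x})=\{i: x_i\neq 0\}$ and the weight is $|\mathrm{supp}(\bm{x})|$; for $B\subseteq\mathbb{F}_q^n$, $\mathrm{Supp}(B)=\bigcup_{\bm{x}\in B}\mathrm{supp}(\bm{x})$. $C^\perp$ is the dual code with respect to the standard inner product and $d(C^\perp)$ is the minimum weight of a nonzero codeword of $C^\perp$. The covering dimension is $\gamma(C)=\infty$ if $\mathrm{Supp}(C)\neq E$, and otherwise $\gamma(C)$ is the least positive integer $r$ such that $C$ has an $r$-dimensional subspace $D$ with $\mathrm{Supp}(D)=E$. A dual Hamming code is an $[(q^k-1)/(q-1),k]$ code over $\mathbb{F}_q$ with a generator matrix whose columns consist of exactly one nonzero vector from each one-dimensional subspace of $\mathbb{F}_q^k$. *)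

(* Defs.v *)
(* Codes are represented by generator matrices:
   the [n,k] code C is the row space of a full-row-rank matrix C : 'M[F]_(k,n). *)
From HB Require Import structures.
From mathcomp Require Import all_boot all_order all_algebra.
Set Implicit Arguments. Unset Strict Implicit. Unset Printing Implicit Defensive.
Import GRing.Theory.
Local Open Scope ring_scope.

Section Codes.
Variable F : finFieldType.
Variable n : nat.

Definition supp (x : 'rV[F]_n) : {set 'I_n} := [set i | x 0 i != 0].
Definition wt (x : 'rV[F]_n) : nat := #|supp x|.

Definition Supp m (A : 'M[F]_(m, n)) : {set 'I_n} :=
  [set i | [exists x : 'rV[F]_n, (x <= A)%MS && (x 0 i != 0)]].

(* minimum weight of a nonzero vector satisfying P
   (convention: n.+1 if there is none) *)
Definition min_wt (P : pred 'rV[F]_n) : nat :=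
  \big[minn/n.+1]_(x : 'rV[F]_n | P x && (x != 0)) wt x.

Definition code m (C : 'M[F]_(m, n)) : pred 'rV[F]_n := fun x => (x <= C)%MS.
Definition dual_code m (C : 'M[F]_(m, n)) : pred 'rV[F]_n :=
  fun x => C *m x^T == 0.

Definition dual_dist m (C : 'M[F]_(m, n)) : nat := min_wt (dual_code C).

Definition has_cover m (C : 'M[F]_(m, n)) (r : nat) : bool :=
  [exists D : 'M[F]_(r, n), [&& row_free D, (D <= C)%MS & Supp D == setT]].

(* covering dimension: None encodes infinity *)
Definition cov_dim m (C : 'M[F]_(m, n)) : option nat :=
  if Supp C == setT then
    Some (\big[minn/n]_(r < n.+1 | (0 < r)%N && has_cover C r) (r : nat))
  else None.

(* C (with k = dimension) is a dual Hamming code: some generator matrix G of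
   the same code has columns consisting of exactly one nonzero vector from
   each one-dimensional subspace of F^k. *)
Definition hamming_columns k (G : 'M[F]_(k, n)) : Prop :=
  (forall j : 'I_n, col j G != 0) /\
  (forall v : 'cV[F]_k, v != 0 -> exists! j : 'I_n, ((col j G)^T <= v^T)%MS).

Definition dual_hamming k (C : 'M[F]_(k, n)) : Prop :=
  exists G : 'M[F]_(k, n), (G == C)%MS /\ hamming_columns G.

End Codes.

(* Main.v *)
Require Import Defs.
From HB Require Import structures.
From mathcomp Require Import all_boot all_order all_algebra zify.
Set Implicit Arguments. Unset Strict Implicit. Unset Printing Implicit Defensive.
Import GRing.Theory.
Local Open Scope ring_scope.

Lemma bigmin_le_nat (I : finType) (P : pred I) (F : I -> nat) d j :
  P j -> (\big[minn/d]_(i | P i) F i <= F j)%N.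
Proof.
move=> Pj; have : j \in index_enum I by rewrite mem_index_enum.
elim: (index_enum I) => // a r IH; rewrite big_cons inE.
case/orP => [/eqP <-|/IH h]; first by rewrite Pj geq_minl.
case: (P a) => //; by rewrite geq_min h orbT.
Qed.

Lemma le_bigmin_nat (I : finType) (P : pred I) (F : I -> nat) d m :
  (m <= d)%N -> (forall i, P i -> m <= F i)%N -> (m <= \big[minn/d]_(i | P i) F i)%N.
Proof.
move=> md mF; elim/big_ind: _ => // a b ha hb; by rewrite leq_min ha hb.
Qed.

Lemma pad (T : finType) (B : {set T}) m : forall A : {set T}, A \subset B ->
  (#|A| <= m)%N -> (m <= #|B|)%N -> exists S : {set T}, [/\ A \subset S, S \subset B & #|S| = m].
Proof.
elim: m => [|m IH] A sAB leA leB.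
  exists A; split => //; by apply/eqP; rewrite -leqn0.
case: (ltngtP #|A| m.+1) leA => // [ltA _|eqA _]; last by exists A.
have [S [sAS sSB cS]] := IH A sAB ltA (ltnW leB).
have : ~~ (B \subset S) by apply/negP => /subset_leq_card; rewrite cS leqNgt leB.
case/subsetPn => x xB xS.
exists (x |: S); split.
- by apply: subset_trans sAS (subsetUr _ _).
- by rewrite subUset sub1set xB sSB.
- by rewrite cardsU1 xS cS.
Qed.

Lemma ker_nz (F : fieldType) m p (B : 'M[F]_(m, p)) :
  (\rank B < m)%N -> exists x : 'rV_m, x != 0 /\ x *m B = 0.
Proof.
move=> lt.
have : kermx B != 0.
  by rewrite -mxrank_eq0 mxrank_ker subn_eq0 -ltnNge.
move=> nzK; case: (pickP (fun i => row i (kermx B) != 0)) => [i nz|none].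
  by exists (row i (kermx B)); split => //; rewrite -row_mul mulmx_ker row0.
case/negP: nzK; apply/eqP/row_matrixP => i; rewrite row0.
by move: (none i) => /= /negbFE/eqP.
Qed.

Section Sub.
Variables (F : finFieldType) (n k : nat) (C : 'M[F]_(k, n)).

Definition colsubT (T : {set 'I_n}) : 'M[F]_(#|T|, k) :=
  \matrix_(t < #|T|, r < k) C r (enum_val t).

Lemma dual_from_rank (T : {set 'I_n}) :
  (\rank (colsubT T) < #|T|)%N ->
  exists x : 'rV[F]_n, [/\ x != 0, C *m x^T == 0 & supp x \subset T].
Proof.
move=> /ker_nz [w [wnz wB]].
pose E : 'M[F]_(#|T|, n) := \matrix_(t < #|T|, l < n) (enum_val t == l)%:R.
have EC : E *m C^T = colsubT T.
  apply/matrixP => t r; rewrite !mxE (bigD1 (enum_val t)) //= big1.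
    by rewrite !mxE eqxx mul1r addr0.
  by move=> l /negbTE nl; rewrite !mxE eq_sym nl mul0r.
exists (w *m E); split.
- case/rV0Pn: wnz => t wt; apply/rV0Pn; exists (enum_val t).
  rewrite !mxE (bigD1 t) //= big1.
    by rewrite !mxE eqxx mulr1 addr0.
  move=> s st; rewrite !mxE.
  suff -> : (enum_val s == enum_val t) = false by rewrite mulr0.
  by apply/negbTE; apply: contra st => /eqP/enum_val_inj ->.
- rewrite -(trmxK C) -trmx_mul -mulmxA EC wB trmx0 //=.
- apply/subsetP => l; rewrite inE; apply: contraR => lT.
  rewrite !mxE big1 // => t _; rewrite !mxE.
  have : enum_val t != l by apply: contra lT => /eqP <-; apply: enum_valP.
  by move/negbTE ->; rewrite mulr0.
Qed.

Lemma vanish (S : {set 'I_n}) : (#|S| < k)%N ->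
  exists u : 'rV[F]_k, u != 0 /\ forall l, l \in S -> (u *m C) 0 l = 0.
Proof.
move=> lt.
have : (\rank (colsubT S)^T < k)%N by apply: leq_ltn_trans lt; apply: rank_leq_col.
case/ker_nz => u [unz uB]; exists u; split => // l lS.
have := congr1 (fun M : 'M_(1, #|S|) => M 0 (enum_rank_in lS l)) uB; rewrite /=.

rewrite /colsubT !mxE => h; rewrite -[RHS]h; apply: eq_bigr => r _; by rewrite !mxE enum_rankK_in.

Qed.

End Sub.

Section PartB.
Variables (F : finFieldType) (n k : nat) (C : 'M[F]_(k, n)).
Hypothesis k2 : (2 <= k)%N.
Hypothesis Cfree : row_free C.
Hypothesis hmin : forall x : 'rV[F]_n, (x <= C)%MS -> x != 0 -> (n - k + 1 <= wt x)%N.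
Hypothesis hnon : forall x : 'rV[F]_n, (x <= C)%MS -> wt x != n.

Lemma colsub_mul (S : {set 'I_n}) (u : 'rV[F]_k) l (lS : l \in S) :
  (u *m (colsubT C S)^T) 0 (enum_rank_in lS l) = (u *m C) 0 l.
Proof. rewrite !mxE; apply: eq_bigr => r _; by rewrite !mxE enum_rankK_in. Qed.

Lemma k_le_n : (k <= n)%N.
Proof. by rewrite -(eqP Cfree) rank_leq_col. Qed.

Lemma k_lt_n : (k < n)%N.
Proof.
rewrite ltn_neqAle k_le_n andbT; apply/negP => /eqP kn.
have full : row_full C by rewrite /row_full (eqP Cfree) kn.
have := hnon (submx_full (const_mx 1) full); apply/negP/negPn; rewrite /wt.
have -> : supp (const_mx 1 : 'rV[F]_n) = setT.
  by apply/setP => l; rewrite !inE mxE oner_neq0.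
by rewrite /wt cardsT card_ord.
Qed.

Lemma nz_off (S : {set 'I_n}) (c : 'rV[F]_n) l : #|S| = k.-1 ->
  (c <= C)%MS -> c != 0 -> (forall j, j \in S -> c 0 j = 0) -> l \notin S -> c 0 l != 0.
Proof.
move=> cS cC cnz van lS; apply/negP => /eqP cl.
have := hmin cC cnz.
have sub : supp c \subset ~: (l |: S).
  apply/subsetP => j; rewrite !inE; apply: contra => /orP [/eqP -> | jS].
    by rewrite cl.
  by rewrite van.
have := subset_leq_card sub.
have := cardsC (l |: S); rewrite cardsU1 lS cS card_ord.
rewrite /wt; move: #|~: _| #|supp c| => a b /=; move: k2; lia.
Qed.

Lemma dual_lb (x : 'rV[F]_n) : x != 0 -> C *m x^T == 0 -> (k < wt x)%N.
Proof.
move=> xnz /eqP Cx; rewrite ltnNge; apply/negP => wk.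
case/rV0Pn: xnz => i xi.
have iS : i \in supp x by rewrite inE.
have [S [sAS sSB cS]] : exists S : {set 'I_n}, [/\ supp x :\ i \subset S, S \subset [set~ i] & #|S| = k.-1].
  apply: pad.
  - by apply/subsetP => j; rewrite !inE => /andP [].
  - move: (cardsD1 i (supp x)); rewrite iS /wt in wk * => h; move: wk k2; rewrite h /= -subn1; set a := #|supp x :\ i|; rewrite -[(_ + a)%N]/(a.+1); lia.
  - have := cardsC [set i]; rewrite cards1 card_ord -subn1; move: k_lt_n; set b := #|[set~ i]|; rewrite add1n => h1 h2; rewrite -h2 in h1; by rewrite leq_subLR add1n ltnW.
have ltS : (#|S| < k)%N by rewrite cS; move: k2; case: (k) => // k' _; rewrite ltnS.
have [u [unz van]] := vanish C ltS.
have cC : (u *m C <= C)%MS by apply: submxMl.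
have cnz : u *m C != 0 by rewrite mulmx_free_eq0.
have iS' : i \notin S by apply/negP => /(subsetP sSB); rewrite !inE eqxx.
have ci := nz_off cS cC cnz van iS'.
have := congr1 (fun M : 'M_(1,1) => M 0 0) (congr1 (mulmx u) Cx).
rewrite mulmx0 mulmxA; move: (u *m C) ci van => c ci van; rewrite !mxE (bigD1 i) //= big1.
  by rewrite !mxE addr0 => /eqP; rewrite mulf_eq0 (negbTE ci) (negbTE xi).
move=> j ji; rewrite !mxE.
have [xj0|xjnz] := eqVneq (x 0 j) 0; first by rewrite xj0 mulr0.
by rewrite van ?mul0r // (subsetP sAS) // !inE ji.
Qed.

Lemma dualB : dual_dist C = k.+1.
Proof.
apply/eqP; rewrite eqn_leq; apply/andP; split; last first.
  apply: le_bigmin_nat; first by move: k_lt_n; lia.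
  by move=> x /andP [hx nz]; apply: dual_lb.
have [T [_ _ cT]] : exists T : {set 'I_n}, [/\ set0 \subset T, T \subset setT & #|T| = k.+1].
  by apply: pad; rewrite ?sub0set ?cards0 ?cardsT ?card_ord ?k_lt_n.
have [x [xnz Cx sT]] : exists x : 'rV[F]_n, [/\ x != 0, C *m x^T == 0 & supp x \subset T].
  by apply: dual_from_rank; apply: leq_ltn_trans (rank_leq_col _) _; rewrite cT.
have Px : dual_code C x && (x != 0) by rewrite /dual_code Cx.
apply: leq_trans (bigmin_le_nat (fun y => wt y) n.+1 Px) _.
by rewrite -cT; apply: subset_leq_card.
Qed.


Lemma cover2 : has_cover C 2.
Proof.
have [S [_ _ cS]] : exists S : {set 'I_n}, [/\ set0 \subset S, S \subset setT & #|S| = k.-1].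
  apply: pad; rewrite ?sub0set ?cards0 ?cardsT ?card_ord //.
  by apply: leq_trans (leq_pred k) k_le_n.
have ltS : (#|S| < k)%N by rewrite cS; move: k2; case: (k) => // k' _; rewrite ltnS.
have [u [unz van]] := vanish C ltS.
have cC : (u *m C <= C)%MS by apply: submxMl.
have cnz : u *m C != 0 by rewrite mulmx_free_eq0.
move: (u *m C) cC cnz van => c cC cnz van.
have off := fun l => nz_off (l := l) cS cC cnz van.
have rk : \rank (colsubT C S) = #|S|.
  apply/eqP; rewrite eqn_leq rank_leq_row leqNgt; apply/negP => /dual_from_rank [x [xnz Cx sx]].
  have := dual_lb xnz Cx; rewrite ltnNge => /negP; apply; rewrite /wt.
  apply: leq_trans (subset_leq_card sx) _; rewrite cS; exact: leq_pred.
have full : row_full (colsubT C S)^T by rewrite /row_full mxrank_tr rk.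
have [u' yE] := submxP (submx_full (const_mx 1 : 'rV[F]_#|S|) full).
have y1 : forall l, l \in S -> (u' *m C) 0 l = 1.
  by move=> l lS; rewrite -(colsub_mul u' lS) -yE mxE.
move: (u' *m C) (submxMl u' C) y1 => y yC y1.
pose D : 'M[F]_(2, n) := \matrix_(r < 2, l < n) (if r == 0 then c 0 l else y 0 l).
have D0 : row 0 D = c by apply/rowP => l; rewrite !mxE.
have D1 : row 1 D = y by apply/rowP => l; rewrite !mxE.
have l0 : exists l0, l0 \in S.
  by apply/set0Pn; rewrite -card_gt0 cS; move: k2; case: (k) => // [[]].
have l1 : exists l1, l1 \notin S.
  apply/existsP; rewrite -negb_forall; apply/negP => /forallP allS.
  have ST : S = setT by apply/setP => l; rewrite inE allS.
  have e : k.-1 = n by rewrite -cS ST cardsT card_ord.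
  by move: k_lt_n; rewrite -e; case: (k) => // k'; rewrite /= ltnNge leqnSn.
case: l0 => l0 l0S; case: l1 => l1 l1S.
apply/existsP; exists D; apply/and3P; split.
- apply: inj_row_free => v vD.
  have E l : (v *m D) 0 l = v 0 0 * c 0 l + v 0 1 * y 0 l.
    rewrite mxE big_ord_recl big_ord1 !mxE /=.
    by congr (_ * _ + _ * _); congr (v 0 _); apply/val_inj.
  have v1 : v 0 1 = 0.
    by move: (E l0); rewrite vD mxE van // y1 // mulr0 mulr1 add0r => <-.
  have v0 : v 0 0 = 0.
    move: (E l1); rewrite vD mxE v1 mul0r addr0 => /esym/eqP.
    by rewrite mulf_eq0 (negbTE (off l1 l1S)) orbF => /eqP.
  apply/rowP => j; rewrite mxE.
  have [->|->] : j = 0 \/ j = 1 by case: j => [[|[|//]] jlt]; [left|right]; apply/val_inj.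
    exact: v0.
  exact: v1.
- apply/row_subP => r; rewrite (_ : row r D = if r == 0 then c else y); first by case: ifP.
  by apply/rowP => l; rewrite !mxE; case: ifP.
- apply/eqP/setP => l; rewrite !inE; apply/existsP.
  case: (boolP (l \in S)) => lS.
    by exists y; rewrite -D1 row_sub /= D1 y1 // oner_neq0.
  by exists c; rewrite -D0 row_sub /= D0 off.
Qed.


Lemma not_cover1 : ~~ has_cover C 1.
Proof.
apply/negP => /existsP [D /and3P [_ DC /eqP SD]].
have := hnon DC; apply/negP/negPn; rewrite /wt.
have -> : supp D = setT.
  apply/setP => l; rewrite !inE.
  have : l \in Supp D by rewrite SD inE.
  rewrite inE => /existsP [x /andP [/sub_rVP [a ->] xl]].
  by move: xl; rewrite mxE; apply: contra => /eqP ->; rewrite mulr0.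
by rewrite /wt cardsT card_ord.
Qed.

Lemma SuppC : Supp C = setT.
Proof.
have /existsP [D /and3P [_ DC /eqP SD]] := cover2.
apply/setP => l; rewrite inE; have : l \in Supp D by rewrite SD inE.
rewrite !inE => /existsP [x /andP [xD xl]].
by apply/existsP; exists x; rewrite xl (submx_trans xD DC).
Qed.

Lemma covB : cov_dim C = Some 2%N.
Proof.
rewrite /cov_dim SuppC eqxx; congr Some; apply/eqP; rewrite eqn_leq; apply/andP; split.
  have n2 : (2 < n.+1)%N by move: k_lt_n k2; lia.
  have P2 : (0 < (Ordinal n2 : nat))%N && has_cover C (Ordinal n2) by rewrite /= cover2.
  exact: (@bigmin_le_nat _ (fun r : 'I_n.+1 => (0 < r)%N && has_cover C r) (fun r : 'I_n.+1 => (r : nat)) n _ P2).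
apply: le_bigmin_nat; first by move: k_lt_n k2; lia.
move=> r /andP [r0 hr]; rewrite ltnNge; apply/negP => r1.
have er : (r : nat) = 1%N by move: r0 r1; lia.
by move: hr; rewrite er (negbTE not_cover1).
Qed.

End PartB.

Section PartA.
Variables (F : finFieldType) (n k : nat) (C G : 'M[F]_(k, n)).
Hypothesis k2 : (2 <= k)%N.
Hypothesis Cfree : row_free C.
Hypothesis GC : (G == C)%MS.
Hypothesis Gnz : forall j : 'I_n, col j G != 0.
Hypothesis Guniq : forall v : 'cV[F]_k, v != 0 -> exists! j : 'I_n, ((col j G)^T <= v^T)%MS.

Lemma GsubC : (G <= C)%MS. Proof. by case/andP: GC. Qed.
Lemma CsubG : (C <= G)%MS. Proof. by case/andP: GC. Qed.

Lemma dualGC (x : 'rV[F]_n) : (C *m x^T == 0) = (G *m x^T == 0).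
Proof.
case/submxP: GsubC => D1 GE; case/submxP: CsubG => D2 CE.
apply/eqP/eqP => h.
  by rewrite GE -mulmxA h mulmx0.
by rewrite CE -mulmxA h mulmx0.
Qed.

Lemma Gentry (x : 'rV[F]_n) r i j : supp x \subset [set i; j] -> i != j ->
  (G *m x^T) r 0 = G r i * x 0 i + G r j * x 0 j.
Proof.
move=> sx ij; rewrite mxE (bigD1 i) //= (bigD1 j) /=; last by rewrite eq_sym.
rewrite big1 ?addr0 ?mxE // => l /andP [li lj]; rewrite mxE.
have : l \notin supp x by apply: (contra (subsetP sx l)); rewrite !inE negb_or li lj.
by rewrite inE negbK => /eqP ->; rewrite mulr0.
Qed.

Lemma dual_lbA (x : 'rV[F]_n) : x != 0 -> G *m x^T == 0 -> (3 <= wt x)%N.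
Proof.
move=> xnz /eqP Gx; rewrite leqNgt; apply/negP => w2.
case/rV0Pn: xnz => i xi.
have iS : i \in supp x by rewrite inE.
have [j sx] : exists j, supp x \subset [set i; j].
  case: (set_0Vmem (supp x :\ i)) => [A0|[j jA]].
    exists i; apply/subsetP => l lS; rewrite !inE; apply/orP; left.
    apply/negPn/negP => li; have : l \in supp x :\ i by rewrite in_setD1 li lS.
    by rewrite A0 inE.
  exists j; apply/subsetP => l lS; rewrite !inE.
  case: (eqVneq l i) => //= li; apply/negPn/negP => lj.
  have : ([set j; l] \subset supp x :\ i).
    apply/subsetP => z; rewrite !inE => /orP [/eqP ->|/eqP ->]; first by move: jA; rewrite !inE.
    by move: lS; rewrite !inE li.
  move/subset_leq_card; rewrite cards2 eq_sym lj /=.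
  move: (cardsD1 i (supp x)); rewrite iS /wt in w2 * => h; move: w2; rewrite h.
  by move: #|supp x :\ i| => a; case: a => [|[|]].
have Gx' r : (G *m x^T) r 0 = 0 by rewrite Gx mxE.
case: (eqVneq i j) => [ij|ij].
  subst j; case/negP: (Gnz i); apply/eqP/colP => r; rewrite !mxE.
  have := Gx' r; rewrite mxE (bigD1 i) //= big1 ?addr0.
    by rewrite mxE => /eqP; rewrite mulf_eq0 (negbTE xi) orbF => /eqP.
  move=> l li; rewrite mxE.
  have : l \notin supp x by apply: (contra (subsetP sx l)); rewrite !inE orbb.
  by rewrite inE negbK => /eqP ->; rewrite mulr0.
have colE : (col i G)^T = (- (x 0 j / x 0 i)) *: (col j G)^T.
  apply/rowP => r; rewrite !mxE.
  have := Gx' r; rewrite (Gentry r sx ij) => /eqP; rewrite addr_eq0 => /eqP e.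
  apply: (mulIf xi); rewrite e mulNr mulNr; congr (- _).
  by rewrite mulrAC divfK // mulrC.
case: (Guniq (Gnz j)) => j0 [_ un].
have e1 := un j (submx_refl _).
have si : ((col i G)^T <= (col j G)^T)%MS by rewrite colE scalemx_sub // submx_refl.
have e2 := un i si.
by move: ij; rewrite -e1 -e2 eqxx.
Qed.


Lemma colvec (v : 'cV[F]_k) : v != 0 -> exists j a, a != 0 /\ col j G = a *: v.
Proof.
move=> vnz; case: (Guniq vnz) => j [/sub_rVP [a ea] _]; exists j, a.
have ea' : col j G = a *: v by apply: trmx_inj; rewrite ea linearZ.
split => //; apply/negP => /eqP a0; move: (Gnz j); by rewrite ea' a0 scale0r eqxx.
Qed.

Lemma dualA : dual_dist C = 3%N.
Proof.
apply/eqP; rewrite eqn_leq; apply/andP; split; last first.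
  apply: le_bigmin_nat.
    by rewrite ltnS (leq_trans k2) // -(eqP Cfree) rank_leq_col.
  by move=> x /andP [hx nz]; apply: dual_lbA; rewrite // -dualGC.
have k0 : (0 < k)%N by apply: leq_trans k2.
pose i0 : 'I_k := Ordinal k0.
pose i1 : 'I_k := Ordinal k2.
pose v1 : 'cV[F]_k := delta_mx i0 0.
pose v2 : 'cV[F]_k := delta_mx i1 0.
have i01 : i0 != i1 by [].
have d1 (a : F) r : (a *: v1) r 0 = if r == i0 then a else 0.
  by rewrite !mxE eqxx andbT mulr_natr; case: (r == i0); rewrite ?mulr1n ?mulr0n.
have d2 (a : F) r : (a *: v2) r 0 = if r == i1 then a else 0.
  by rewrite !mxE eqxx andbT mulr_natr; case: (r == i1); rewrite ?mulr1n ?mulr0n.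
have d3 (a : F) r : (a *: (v1 + v2)) r 0 = (if r == i0 then a else 0) + (if r == i1 then a else 0).
  by rewrite scalerDr mxE d1 d2.
have nz1 : v1 != 0 by apply/cV0Pn; exists i0; rewrite -(scale1r v1) d1 eqxx oner_neq0.
have nz2 : v2 != 0 by apply/cV0Pn; exists i1; rewrite -(scale1r v2) d2 eqxx oner_neq0.
have nz3 : v1 + v2 != 0.
  by apply/cV0Pn; exists i0; rewrite -(scale1r (v1 + v2)) d3 eqxx (negbTE i01) addr0 oner_neq0.
have [j1 [a1 [a1nz c1]]] := colvec nz1.
have [j2 [a2 [a2nz c2]]] := colvec nz2.
have [j3 [a3 [a3nz c3]]] := colvec nz3.
have j12 : j1 != j2.
  apply/negP => /eqP e; have := congr1 (fun M : 'cV_k => M i0 0) c2.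
  by rewrite -e c1 /= d1 d2 eqxx (negbTE i01) => /eqP; rewrite (negbTE a1nz).
have j13 : j1 != j3.
  apply/negP => /eqP e; have := congr1 (fun M : 'cV_k => M i1 0) c3.
  by rewrite -e c1 /= d1 d3 eqxx eq_sym (negbTE i01) add0r => /eqP; rewrite eq_sym (negbTE a3nz).
have j23 : j2 != j3.
  apply/negP => /eqP e; have := congr1 (fun M : 'cV_k => M i0 0) c3.
  by rewrite -e c2 /= d2 d3 eqxx (negbTE i01) addr0 => /eqP; rewrite eq_sym (negbTE a3nz).
pose T : {set 'I_n} := j1 |: (j2 |: [set j3]).
have cT : #|T| = 3%N.
  by rewrite !cardsU1 cards1 !inE negb_or j12 j13 j23.
have rk : (\rank (colsubT G T) <= 2)%N.
  apply: (@leq_trans (\rank (v1^T + v2^T)%MS)).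
    apply: mxrankS; apply/row_subP => t.
    have -> : row t (colsubT G T) = (col (enum_val t) G)^T.
      by apply/rowP => r; rewrite !mxE.
    have : enum_val t \in T by apply: enum_valP.
    rewrite !inE => /or3P [] /eqP ->.
    - by rewrite c1 linearZ scalemx_sub // addsmxSl.
    - by rewrite c2 linearZ scalemx_sub // addsmxSr.
    - by rewrite c3 linearZ scalemx_sub // linearD addmx_sub_adds // ?addsmxSl ?addsmxSr.
  apply: leq_trans (leq_of_leqif (mxrank_adds_leqif _ _)) _.
  by rewrite -[2%N]/(1 + 1)%N leq_add // rank_leq_row.
have [x [xnz Gx sT]] : exists x : 'rV[F]_n, [/\ x != 0, G *m x^T == 0 & supp x \subset T].
  by apply: dual_from_rank; apply: leq_ltn_trans rk _; rewrite cT.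
have Px : dual_code C x && (x != 0) by rewrite /dual_code dualGC Gx.
apply: leq_trans (bigmin_le_nat (fun y => wt y) n.+1 Px) _.
by rewrite -cT; apply: subset_leq_card.
Qed.


Lemma col_mul' p q m (A : 'M[F]_(p, q)) (B : 'M[F]_(q, m)) j :
  col j (A *m B) = A *m col j B.
Proof. by apply/colP => i; rewrite !mxE; apply: eq_bigr => l _; rewrite !mxE. Qed.

Lemma SuppCA : Supp C = setT.
Proof.
apply/setP => l; rewrite !inE; case/cV0Pn: (Gnz l) => r grl.
apply/existsP; exists (row r G); rewrite (submx_trans (row_sub r G) GsubC) /=.
by rewrite !mxE in grl *.
Qed.

Lemma no_cover r : (0 < r < k)%N -> ~~ has_cover C r.
Proof.
case/andP => r0 rk; apply/negP => /existsP [D /and3P [_ DC /eqP SD]].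
case/submxP: (submx_trans DC CsubG) => A DA.
have : (\rank A^T < k)%N by apply: leq_ltn_trans (rank_leq_col _) rk.
case/ker_nz => w [wnz wA].
have wTnz : w^T != 0 by apply: contra wnz => /eqP h; rewrite -(trmxK w) h trmx0.
case: (Guniq wTnz) => j [/sub_rVP [a ea] _].
have colD : col j D = 0.
  rewrite DA col_mul' -(trmxK (col j G)) ea trmxK linearZ /=.
  by rewrite -scalemxAr -(trmxK A) -trmx_mul wA trmx0 scaler0.
have : j \in Supp D by rewrite SD inE.
rewrite inE => /existsP [x /andP [/submxP [y ->] /negP]]; apply.
have -> : (y *m D) 0 j = (y *m col j D) 0 0.
  by rewrite !mxE; apply: eq_bigr => l _; rewrite !mxE.
by rewrite colD mulmx0 mxE.
Qed.

Lemma covA : cov_dim C = Some k.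
Proof.
have kn : (k <= n)%N by rewrite -(eqP Cfree) rank_leq_col.
rewrite /cov_dim SuppCA eqxx; congr Some; apply/eqP; rewrite eqn_leq; apply/andP; split.
  have nk : (k < n.+1)%N by rewrite ltnS.
  have Pk : (0 < (Ordinal nk : nat))%N && has_cover C (Ordinal nk).
    rewrite /= (leq_trans _ k2) //; apply/existsP; exists C.
    by rewrite Cfree submx_refl SuppCA eqxx.
  exact: (@bigmin_le_nat _ (fun r : 'I_n.+1 => (0 < r)%N && has_cover C r) (fun r : 'I_n.+1 => (r : nat)) n _ Pk).
apply: le_bigmin_nat => // r /andP [r0 hr]; rewrite leqNgt; apply/negP => rk.
have h : (0 < r < k)%N by rewrite r0 rk.
by move: hr; rewrite (negbTE (no_cover h)).
Qed.

End PartA.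

Unset Implicit Arguments.

Theorem mainTheorem3 (F : finFieldType) (n k : nat) (C : 'M[F]_(k, n)) :
  (2 <= k)%N -> row_free C ->
  (dual_hamming C ->
     dual_dist C = 3%N /\ cov_dim C = Some k /\
     cov_dim C = Some (k + 3 - dual_dist C)%N) /\
  (min_wt (code C) = (n - k + 1)%N ->
   (forall x : 'rV[F]_n, (x <= C)%MS -> wt x != n) ->
     dual_dist C = k.+1 /\ cov_dim C = Some 2%N /\
     cov_dim C = Some (k + 3 - dual_dist C)%N).
Proof.
move=> k2 Cfree; split.
  case=> G [GC [Gnz Guniq]].
  have d := dualA k2 Cfree GC Gnz Guniq.
  have c := covA k2 Cfree GC Gnz Guniq.
  by rewrite d c addnK.
move=> hm hn.
have hmin : forall x : 'rV[F]_n, (x <= C)%MS -> x != 0 -> (n - k + 1 <= wt x)%N.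
  move=> x xC xnz; rewrite -hm.
  have Px : code C x && (x != 0) by rewrite /code xC.
  exact: (bigmin_le_nat (fun y => wt y) n.+1 Px).
have d := dualB k2 Cfree hmin hn.
have c := covB k2 Cfree hmin hn.
rewrite d c; split => //; split => //; congr Some.
lia.
Qed.
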